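(* Let $p$ be a design and let $\Omega\subseteq\{0,1\}^n$ be the set of treatment vectors it assigns positive probability, $m=|\Omega|$. Each unit $i$ has exposure levels $\{0,\dots,K_i-1\}$ given by $e_i=f(\mathbf z_{N_i})$ and potential outcomes $Y_i(z,e)$. Fix $(z_1,e_1)\ne(z_0,e_0)$ and let $\theta=\frac1n\sum_i\big(Y_i(z_1,e_1)-Y_i(z_0,e_0)\big)$, and $\pi_i(z,e)=P(Z_i=z,f(\mathbf Z_{N_i})=e)$. If for each $i$ we have $m>2K_i$ and $0<\pi_i(z_1,e_1)<1$, $0<\pi_i(z_0,e_0)<1$, then there are infinitely many estimators of the form $\hat\theta=\sum_iw_i(\mathbf Z)Y_i^{obs}$, with weight functions $w_i:\Omega\to\mathbb R$, that satisfy $\mathbb E[\hat\theta]=\theta$ for every choice of the real numbers $\{Y_i(z,e)\}$.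
   Context: Units $1,\dots,n$ each have an interference neighborhood $N_i\subseteq\{1,\dots,n\}\setminus\{i\}$ and exposure function $f$ mapping $\{0,1\}^{N_i}$ onto $\{0,\dots,K_i-1\}$. The observed outcome is $Y_i^{obs}=Y_i(Z_i,f(\mathbf Z_{N_i}))$. *)

(* Defs.v *)
From mathcomp Require Import all_boot all_order all_algebra.
Set Implicit Arguments. Unset Strict Implicit. Unset Printing Implicit Defensive.
Import Order.TTheory GRing.Theory Num.Theory.
Local Open Scope ring_scope.

(* Treatment vectors in {0,1}^n (true = treated). *)
Definition treat (n : nat) := {ffun 'I_n -> bool}.

Definition omega (R : realFieldType) n (p : treat n -> R) : {set treat n} :=
  [set z | 0 < p z].

Definition is_design (R : realFieldType) n (p : treat n -> R) : Prop :=
  (forall z, 0 <= p z) /\ \sum_z p z = 1.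

Definition pi_ie (R : realFieldType) n (K : 'I_n -> nat) (p : treat n -> R)
  (expo : forall i : 'I_n, treat n -> 'I_(K i)) (i : 'I_n) (z : bool) (e : nat) : R :=
  \sum_(v : treat n | (v i == z) && (val (expo i v) == e)) p v.

Definition Yobs n (R : Type) (K : 'I_n -> nat)
  (expo : forall i : 'I_n, treat n -> 'I_(K i)) (Y : 'I_n -> bool -> nat -> R)
  (i : 'I_n) (v : treat n) : R := Y i (v i) (val (expo i v)).

Definition expect_est (R : realFieldType) n (K : 'I_n -> nat) (p : treat n -> R)
  (expo : forall i : 'I_n, treat n -> 'I_(K i)) (Y : 'I_n -> bool -> nat -> R)
  (w : 'I_n -> treat n -> R) : R :=
  \sum_v p v * \sum_i w i v * Yobs expo Y i v.

Definition theta (R : realFieldType) n (Y : 'I_n -> bool -> nat -> R)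
  (z1 : bool) (e1 : nat) (z0 : bool) (e0 : nat) : R :=
  n%:R^-1 * \sum_i (Y i z1 e1 - Y i z0 e0).

Definition unbiased (R : realFieldType) n (K : 'I_n -> nat) (p : treat n -> R)
  (expo : forall i : 'I_n, treat n -> 'I_(K i))
  (z1 : bool) (e1 : nat) (z0 : bool) (e0 : nat) (w : 'I_n -> treat n -> R) : Prop :=
  forall Y : 'I_n -> bool -> nat -> R,
    expect_est p expo Y w = theta Y z1 e1 z0 e0.

(* Main.v *)
Require Import Defs.
From mathcomp Require Import all_boot all_order all_algebra.
From mathcomp Require Import ring.
Import Order.TTheory GRing.Theory Num.Theory.
Local Open Scope ring_scope.

Lemma sum_ind1 (R : realFieldType) (T : finType) (a : T) (G : T -> R) :
  \sum_v (v == a)%:R * G v = G a.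
Proof.
rewrite (bigD1 a) //= eqxx mul1r big1 ?addr0 // => v /negbTE ->; by rewrite mul0r.
Qed.

Lemma pigeon (R : realFieldType) n (p : treat n -> R) (i0 : 'I_n) (K : nat)
  (ex : treat n -> 'I_K) (Hm : (2 * K < #|omega p|)%N) :
  exists a b, [/\ a \in omega p, b \in omega p, a != b, a i0 = b i0 & ex a = ex b].
Proof.
pose f (v : treat n) := (v i0, ex v).
case: (boolP [exists a, exists b, [&& a \in omega p, b \in omega p, a != b & f a == f b]]).
  move/existsP=> [a /existsP [b /and4P [Ha Hb Hab /eqP Hf]]].
  exists a, b; split=> //; [exact: (congr1 fst Hf) | exact: (congr1 snd Hf)].
move=> Hn; exfalso.
have inj : {in omega p &, injective f}.
  move=> a b Ha Hb Hf; apply/eqP; apply: contraNT Hn => Hab.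
  by apply/existsP; exists a; apply/existsP; exists b; rewrite Ha Hb Hab Hf eqxx.
have := max_card (mem [set f x | x in omega p]).
rewrite (card_in_imset inj) card_prod card_bool card_ord => H.
by move: (leq_trans Hm H); rewrite ltnn.
Qed.

Theorem proposition17 (R : realFieldType) (n : nat) (n_gt0 : (0 < n)%N)
  (p : treat n -> R) (Hp : is_design p)
  (N : 'I_n -> {set 'I_n}) (HN : forall i, i \notin N i)
  (K : 'I_n -> nat) (expo : forall i : 'I_n, treat n -> 'I_(K i))
  (Hloc : forall i (v v' : treat n), (forall j, j \in N i -> v j = v' j) ->
            expo i v = expo i v')
  (Honto : forall i (e : 'I_(K i)), exists v : treat n, expo i v = e)
  (z1 : bool) (e1 : nat) (z0 : bool) (e0 : nat)
  (Hneq : (z1, e1) <> (z0, e0))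
  (Hm : forall i, (2 * K i < #|omega p|)%N)
  (Hpi1 : forall i, 0 < pi_ie p expo i z1 e1 < 1)
  (Hpi0 : forall i, 0 < pi_ie p expo i z0 e0 < 1) :
  forall (k : nat) (ws : 'I_k -> ('I_n -> treat n -> R)),
  exists w : 'I_n -> treat n -> R,
    unbiased p expo z1 e1 z0 e0 w /\
    forall j : 'I_k, exists i (v : treat n), v \in omega p /\ w i v <> ws j i v.
Proof.
move=> k ws.
pose i0 : 'I_n := Ordinal n_gt0.
have [a [b [Ha Hb Hab Hab1 Hab2]]] := @pigeon R n p i0 (K i0) (expo i0) (Hm i0).
have pa : 0 < p a by move: Ha; rewrite inE.
have pb : 0 < p b by move: Hb; rewrite inE.
pose ind (i : 'I_n) (v : treat n) (z : bool) (e : nat) : R := ((v i == z) && (val (expo i v) == e))%:R.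
pose HT (i : 'I_n) (v : treat n) := n%:R^-1 * (ind i v z1 e1 / pi_ie p expo i z1 e1
                          - ind i v z0 e0 / pi_ie p expo i z0 e0).
pose g (v : treat n) := (v == a)%:R / p a - (v == b)%:R / p b.
pose d (j : 'I_k) := (ws j i0 a - HT i0 a) * p a.
pose c := 1 + \sum_j `|d j|.
pose w (i : 'I_n) (v : treat n) := HT i v + (i == i0)%:R * c * g v.
exists w; split.
  move=> Y; rewrite /expect_est /theta.
  under eq_bigr do rewrite mulr_sumr.
  rewrite exchange_big mulr_sumr; apply: eq_bigr => i _.
  have key : forall z e, \sum_v p v * ind i v z e * Yobs expo Y i v
                         = Y i z e * pi_ie p expo i z e.
    move=> z e; rewrite /pi_ie mulr_sumr [RHS]big_mkcond /=.
    apply: eq_bigr => v _; rewrite /ind /Yobs.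
    case: andP => [[/eqP -> /eqP ->]|_]; first by rewrite mulr1 mulrC.
    by rewrite mulr0 mul0r.
  have gz : \sum_v p v * g v * Yobs expo Y i0 v = 0.
    rewrite /g.
    under eq_bigr do rewrite mulrBr mulrBl.
    rewrite sumrB.
    under eq_bigr do rewrite mulrCA mulrA.
    under [X in _ - X]eq_bigr do rewrite mulrCA mulrA.
    under eq_bigr do rewrite -!mulrA.
    under [X in _ - X]eq_bigr do rewrite -!mulrA.
    by rewrite !sum_ind1 /Yobs Hab1 Hab2 !mulrA !mulfV ?gt_eqF // subrr.
  rewrite (eq_bigr (fun v => n%:R^-1 * ((p v * ind i v z1 e1 * Yobs expo Y i v) / pi_ie p expo i z1 e1
       - (p v * ind i v z0 e0 * Yobs expo Y i v) / pi_ie p expo i z0 e0)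
       + (i == i0)%:R * c * (p v * g v * Yobs expo Y i v))); last first.
    by move=> v _; rewrite /w /HT; ring.
  rewrite big_split /= -mulr_sumr sumrB -!mulr_suml !key -mulr_sumr.
  have -> : (i == i0)%:R * c * \sum_v p v * g v * Yobs expo Y i v = 0.
    by case: eqP => [->|_]; rewrite ?gz ?mulr0 ?mul0r.
  have [h1 _] := andP (Hpi1 i); have [h0 _] := andP (Hpi0 i).
  by rewrite addr0 !mulfK ?gt_eqF.
move=> j; exists i0, a; split=> // Heq.
have Hc : c = d j.
  rewrite /d -Heq /w /g eqxx (negbTE Hab) /=.
  rewrite eqxx; have pa0 := lt0r_neq0 pa; have pb0 := lt0r_neq0 pb; clear Heq; clearbody w; move: (HT i0 a) c (p a) (p b) pa0 pb0 => h x y y2 hy hy2.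
  change (nat_of_bool true) with 1%N; field; by rewrite hy hy2.
have H1 : `|d j| <= \sum_j `|d j|.
  rewrite (bigD1 j) //= lerDl; apply: sumr_ge0 => l _; exact: normr_ge0.
have H2 : d j < c.
  rewrite /c; apply: (le_lt_trans (real_ler_norm (num_real _))).
  apply: (le_lt_trans H1); rewrite ltrDr; exact: ltr01.
by move: H2; rewrite Hc ltxx.
Qed.
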